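(* Let $Y\in\mathbb{R}^n$ satisfy $Y=X\beta+\sigma\xi$, where $X\in\mathbb{R}^{n\times p}$ is a deterministic matrix with columns $X_1,\dots,X_p$, $\beta\in\mathbb{R}^p$, $\sigma>0$ and $\xi\sim\mathcal{N}(0,\mathbb{I}_n)$. Let $q\ge1$ and let $\pi=\pi_1\otimes\cdots\otimes\pi_p$ be a prior on $\beta$ with independent components, $\pi_j$ being the law of $\beta_j$. Then $$\inf_{\hat T}\mathbb{E}_\pi\mathbf{E}_\beta\sum_{j=1}^p|\hat T_j(X,Y)-\beta_j|^q\ \ge\ \sum_{j=1}^p\inf_{\hat T_j}\mathbb{E}_{\pi_j}\mathbf{E}_{\beta_j}|\hat T_j(X_j,\tilde Y_j)-\beta_j|^q,$$ where $\tilde Y_j=Y-\sum_{i\ne j}X_i\beta_i=\beta_jX_j+\sigma\xi$, the infimum on the left is over all $\mathbb{R}^p$-valued measurable functions $\hat T=(\hat T_1,\dots,\hat T_p)$ of $(X,Y)$, and each infimum on the right is over all real-valued measurable functions $\hat T_j$ of $(X_j,\tilde Y_j)$.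
   Context: $\mathbf{E}_\beta$ denotes expectation over $\xi$ for fixed $\beta$; $\mathbb{E}_\pi$ denotes expectation over $\beta\sim\pi$ (resp. $\mathbb{E}_{\pi_j}$ over $\beta_j\sim\pi_j$). *)

(* Defs.v *)
From HB Require Import structures.
From mathcomp Require Import all_boot all_order all_algebra.
From mathcomp Require Import all_classical all_reals all_analysis.

Set Implicit Arguments.
Unset Strict Implicit.
Unset Printing Implicit Defensive.

Import Order.TTheory GRing.Theory Num.Theory.
Local Open Scope classical_set_scope.
Local Open Scope ring_scope.

(* On the product sigma-algebra this determines [P] uniquely. *)
Definition is_product_prob {R : realType} (n : nat)
    (P : probability (n.-tuple (measurableTypeR R)) R) (Q : 'I_n -> probability (measurableTypeR R) R) : Prop :=
  forall B : 'I_n -> set (measurableTypeR R), (forall i, measurable (B i)) ->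
    P [set x | forall i, B i (tnth x i)] = (\prod_(i < n) Q i (B i))%E.

Definition std_gaussian {R : realType} (n : nat)
    (G : probability (n.-tuple (measurableTypeR R)) R) : Prop :=
  is_product_prob G (fun _ => (normal_prob (0 : R) 1 : probability (measurableTypeR R) R)).

Definition lin_model {R : realType} (n p : nat) (X : 'M[R]_(n, p))
    (beta : p.-tuple R) (sigma : R) (xi : n.-tuple R) : n.-tuple R :=
  [tuple \sum_(k < p) X i k * tnth beta k + sigma * tnth xi i | i < n].

Definition single_model {R : realType} (n p : nat) (X : 'M[R]_(n, p))
    (j : 'I_p) (bj : R) (sigma : R) (xi : n.-tuple R) : n.-tuple R :=
  [tuple bj * X i j + sigma * tnth xi i | i < n].

(* E_pi E_beta sum_j |T_j(X,Y) - beta_j|^q  (X is fixed, so T is a function of Y) *)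
Definition bayes_risk {R : realType} (n p : nat) (X : 'M[R]_(n, p)) (sigma q : R)
    (G : probability (n.-tuple (measurableTypeR R)) R) (Pi : probability (p.-tuple (measurableTypeR R)) R)
    (T : n.-tuple (measurableTypeR R) -> p.-tuple (measurableTypeR R)) : \bar R :=
  (\int[Pi]_b \int[G]_xi
     (\sum_(j < p) `|tnth (T (lin_model X b sigma xi)) j - tnth b j| `^ q)%:E)%E.

Definition bayes_risk1 {R : realType} (n p : nat) (X : 'M[R]_(n, p)) (sigma q : R)
    (G : probability (n.-tuple (measurableTypeR R)) R) (j : 'I_p) (Pij : probability (measurableTypeR R) R)
    (Tj : n.-tuple (measurableTypeR R) -> measurableTypeR R) : \bar R :=
  (\int[Pij]_bj \int[G]_xi
     (`|Tj (single_model X j bj sigma xi) - bj| `^ q)%:E)%E.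

Definition minimax_bayes {R : realType} (n p : nat) (X : 'M[R]_(n, p)) (sigma q : R)
    (G : probability (n.-tuple (measurableTypeR R)) R) (Pi : probability (p.-tuple (measurableTypeR R)) R) : \bar R :=
  ereal_inf [set bayes_risk X sigma q G Pi T |
             T in [set T : n.-tuple (measurableTypeR R) -> p.-tuple (measurableTypeR R) | measurable_fun setT T]].

Definition minimax_bayes1 {R : realType} (n p : nat) (X : 'M[R]_(n, p)) (sigma q : R)
    (G : probability (n.-tuple (measurableTypeR R)) R) (j : 'I_p) (Pij : probability (measurableTypeR R) R) : \bar R :=
  ereal_inf [set bayes_risk1 X sigma q G j Pij Tj |
             Tj in [set Tj : n.-tuple (measurableTypeR R) -> measurableTypeR R | measurable_fun setT Tj]].

(* Main.v *)
Require Import Defs.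
From HB Require Import structures.
From mathcomp Require Import all_boot all_order all_algebra.
From mathcomp Require Import all_classical all_reals all_analysis.
From mathcomp Require Import measurable_realfun.
Import Order.TTheory GRing.Theory Num.Theory.
Local Open Scope classical_set_scope.
Local Open Scope ring_scope.

Section helpers.
Context {R : realType}.
Local Notation RR := (measurableTypeR R).

Definition rect {p} (B : 'I_p -> set RR) : set (p.-tuple RR) :=
  [set x | forall i, B i (tnth x i)].

Lemma rect_measurable p (B : 'I_p -> set RR) :
  (forall i, measurable (B i)) -> measurable (rect B).
Proof.
move=> mB.
have -> : rect B = \big[setI/[set: p.-tuple RR]]_(i <- enum (ordinal p)) ((fun x : p.-tuple RR => tnth x i) @^-1` B i).
  rewrite -bigcap_seq; apply/seteqP; split=> x /=.
  - by move=> h i _; exact: h.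
  - by move=> h i; apply: h => /=; rewrite mem_enum.
elim: (enum _) => [|i s ih]; first by rewrite big_nil.
rewrite big_cons; apply: measurableI => //.
rewrite -[X in measurable X]setTI; exact: measurable_tnth.
Qed.

Definition rects p : set (set (p.-tuple RR)) :=
  [set A | exists2 B : 'I_p -> set RR, (forall i, measurable (B i)) & A = rect B].

Lemma measurable_rects p (A : set (p.-tuple RR)) : measurable A -> <<s rects p >> A.
Proof.
move=> mA; apply: (smallest_sub _ _ mA).
  exact: smallest_sigma_algebra.
apply: (big_ind (fun S => S `<=` <<s rects p >>)).
- by [].
- by move=> S1 S2 h1 h2 x [/h1|/h2].
move=> i _ Z [Y mY <-]; apply: sub_gen_smallest.
exists (fun k => if k == i then Y else setT).
  by move=> k; case: eqP.
apply/seteqP; split=> x /=.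
- by move=> [_ hY] k; case: eqP => // ->.
- by move=> h; split => //; have := h i; rewrite eqxx.
Qed.


Definition repl {p} (b : p.-tuple RR) (j : 'I_p) (c : RR) : p.-tuple RR :=
  [tuple if i == j then c else tnth b i | i < p].

Lemma measurable_repl {p} (j : 'I_p) :
  measurable_fun setT (fun z : RR * p.-tuple RR => repl z.2 j z.1).
Proof.
apply/measurable_fun_tnthP => i.
have -> : ((fun x : p.-tuple RR => tnth x i) \o (fun z : RR * p.-tuple RR => repl z.2 j z.1)) =
    (fun z => if i == j then z.1 else tnth z.2 i).
  by apply/funext => z; rewrite /= tnth_mktuple.
case: eqP => _; first exact: measurable_fst.
exact: measurableT_comp (measurable_tnth i) measurable_snd.
Qed.

Definition pfm {d d'} {T1 : measurableType d} {T2 : measurableType d'}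
  (m : measure T1 R) {f : T1 -> T2} (mf : measurable_fun setT f) : measure T2 R.
Proof. refine (pushforward m f : measure T2 R); exact: mf. Defined.

Lemma pfmE {d d'} {T1 : measurableType d} {T2 : measurableType d'}
  (m : measure T1 R) {f : T1 -> T2} (mf : measurable_fun setT f) A :
  pfm m mf A = pushforward m f A.
Proof. by []. Qed.

Lemma prod_decomp {p} (Pi : probability (p.-tuple RR) R) (Pij : 'I_p -> probability RR R)
  (hPi : is_product_prob Pi Pij) (j : 'I_p) (A : set (p.-tuple RR)) : measurable A ->
  Pi A = pushforward (Pij j \x Pi)%E (fun z : RR * p.-tuple RR => repl z.2 j z.1) A.
Proof.
move=> mA.
have mf := @measurable_repl p j.
rewrite -(pfmE _ mf).
eapply (@g_sigma_algebra_measure_unique _ _ _ (rects p) _ (fun _ => setT) _ _ Pi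
   (pfm (Pij j \x Pi)%E mf)).
- move=> _ _ [B mB ->] [C mC ->]; exists (fun i => B i `&` C i).
    by move=> i; exact: measurableI.
  by apply/seteqP; split => x /=; [move=> [h1 h2] i; split; [exact: h1|exact: h2]|
     move=> h; split => i; have [] := h i].
- move=> _ [B mB ->]; rewrite pfmE /pushforward.
  pose B' i := if i == j then setT else B i.
  have -> : (fun z : RR * p.-tuple RR => repl z.2 j z.1) @^-1` rect B = B j `*` rect B'.
    apply/seteqP; split=> -[c b] /=.
    + move=> h; split; first by have := h j; rewrite tnth_mktuple eqxx.
      move=> i; rewrite /B'; case: eqP => [//|/eqP ne].
      by have := h i; rewrite tnth_mktuple (negbTE ne).
    + move=> [hc hb] i; rewrite tnth_mktuple; case: eqP => [->//|/eqP ne].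
      by have := hb i; rewrite /B' (negbTE ne).
  have mB' : forall i, measurable (B' i) by move=> i; rewrite /B'; case: eqP.
  have h := @product_measure1E _ _ _ _ R (Pij j) Pi (B j) (rect B') (mB j) (@rect_measurable p B' mB').
  transitivity (Pij j (B j) * Pi (rect B'))%E; last by rewrite -h.
  transitivity (\prod_(i < p) Pij i (B i))%E; first exact: hPi.
  transitivity (Pij j (B j) * \prod_(i < p) Pij i (B' i))%E; last first.
    by congr (_ * _)%E; apply/esym; exact: hPi.
  rewrite [in LHS](bigD1 j) //= [in RHS](bigD1 j) //= /B' eqxx probability_setT mul1e.
  congr (_ * _)%E; apply: eq_bigr => i /negbTE ->//.
- by move=> _ /=; rewrite probability_setT ltry.
- exact: measurable_rects.
Unshelve.
- by move=> _ [B mB ->]; exact: rect_measurable.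
- move=> k /=; exists (fun _ => setT) => //.
  by apply/seteqP; split => x.
- by apply/seteqP; split => x // _; exists 0%N.

Qed.


Lemma integral_decomp {p} (Pi : probability (p.-tuple RR) R) (Pij : 'I_p -> probability RR R)
  (hPi : is_product_prob Pi Pij) (j : 'I_p) (F : p.-tuple RR -> \bar R) :
  measurable_fun [set: p.-tuple RR] F -> (forall b, 0 <= F b)%E ->
  (\int[Pi]_b F b = \int[Pi]_b \int[Pij j]_c F (repl b j c))%E.
Proof.
move=> mF F0.
have mf := @measurable_repl p j.
transitivity (\int[pfm (Pij j \x Pi)%E mf]_b F b)%E.
  by apply: eq_measure_integral => A mA _; rewrite pfmE; exact: prod_decomp.
transitivity (\int[(Pij j \x Pi)%E]_(z in (fun z : RR * p.-tuple RR => repl z.2 j z.1) @^-1` setT)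
   (F \o (fun z : RR * p.-tuple RR => repl z.2 j z.1)) z)%E.
  by apply: ge0_integral_pushforward => // y _; exact: F0.
rewrite preimage_setT.
rewrite (fubini_tonelli2 (F \o (fun z : RR * p.-tuple RR => repl z.2 j z.1))) //.
  all: try (by exact: measurableT_comp mF mf); try (by move=> z; exact: F0).
Qed.


Lemma RRtoR d (T : measurableType d) (D : set T) (f : T -> R) :
  @measurable_fun _ _ T R D f -> @measurable_fun _ _ T RR D f.
Proof. by []. Qed.

Lemma RtoRR d (T : measurableType d) (D : set T) (f : T -> R) :
  @measurable_fun _ _ T RR D f -> @measurable_fun _ _ T R D f.
Proof. by []. Qed.

Lemma mtnthR {d} {T : measurableType d} {n} (f : T -> n.-tuple RR) (i : 'I_n) :
  measurable_fun setT f -> @measurable_fun _ _ T R setT (fun x => tnth (f x) i).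
Proof. move=> mf; apply: RtoRR; exact: (measurableT_comp (measurable_tnth i) mf). Qed.

Lemma measurable_lin {n p} (X : 'M[R]_(n,p)) (sigma : R) :
  @measurable_fun _ _ (p.-tuple RR * n.-tuple RR)%type (n.-tuple RR) setT
    (fun z => lin_model X z.1 sigma z.2).
Proof.
apply/measurable_fun_tnthP => i.
have -> : ((fun x : n.-tuple RR => tnth x i) \o (fun z : p.-tuple RR * n.-tuple RR => lin_model X z.1 sigma z.2)) =
   (fun z : p.-tuple RR * n.-tuple RR => (\sum_(k < p) X i k * tnth z.1 k + sigma * tnth z.2 i : R)).
  by apply/funext => z; rewrite /= tnth_mktuple.
apply: RRtoR; apply: measurable_funD.
  apply: measurable_sum => k; apply: measurable_funM; first exact: measurable_cst.
  by apply: mtnthR; exact: measurable_fst.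
apply: measurable_funM; first exact: measurable_cst.
by apply: mtnthR; exact: measurable_snd.
Qed.


Definition gj {n p} (X : 'M[R]_(n,p)) (sigma q : R) (T : n.-tuple RR -> p.-tuple RR) (j : 'I_p)
  (z : p.-tuple RR * n.-tuple RR) : \bar R :=
  (`|tnth (T (lin_model X z.1 sigma z.2)) j - tnth z.1 j| `^ q)%:E.

Lemma measurable_gj {n p} (X : 'M[R]_(n,p)) (sigma q : R) (T : n.-tuple RR -> p.-tuple RR) (j : 'I_p) :
  measurable_fun setT T -> measurable_fun setT (gj X sigma q T j).
Proof.
move=> mT; apply/measurable_EFinP.
apply: (measurableT_comp (measurable_powR q)).
apply: (measurableT_comp (@normr_measurable R setT)).
apply: measurable_funB.
- apply: mtnthR; exact: measurableT_comp mT (measurable_lin X sigma).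
- apply: mtnthR; exact: measurable_fst.
Qed.

Definition shiftT {n p} (X : 'M[R]_(n,p)) (T : n.-tuple RR -> p.-tuple RR) (j : 'I_p)
  (b : p.-tuple RR) (y : n.-tuple RR) : RR :=
  tnth (T [tuple (tnth y i + \sum_(k < p | k != j) X i k * tnth b k : R) | i < n]) j.

Lemma measurable_shiftT {n p} (X : 'M[R]_(n,p)) (T : n.-tuple RR -> p.-tuple RR) (j : 'I_p) b :
  measurable_fun setT T -> measurable_fun setT (shiftT X T j b).
Proof.
move=> mT; apply: (measurableT_comp (measurable_tnth j)); apply: (measurableT_comp mT).
apply/measurable_fun_tnthP => i.
have -> : ((fun x : n.-tuple RR => tnth x i) \o (fun y : n.-tuple RR =>
     [tuple (tnth y i + \sum_(k < p | k != j) X i k * tnth b k : R) | i < n])) =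
   (fun y : n.-tuple RR => (tnth y i + \sum_(k < p | k != j) X i k * tnth b k : R)).
  by apply/funext => z; rewrite /= tnth_mktuple.
apply: RRtoR; apply: measurable_funD; last exact: measurable_cst.
apply: RtoRR; exact: measurable_tnth.
Qed.

Lemma lin_repl {n p} (X : 'M[R]_(n,p)) (sigma : R) (b : p.-tuple RR) j c (xi : n.-tuple RR) :
  lin_model X (repl b j c) sigma xi =
  [tuple (tnth (single_model X j c sigma xi) i + \sum_(k < p | k != j) X i k * tnth b k : R) | i < n].
Proof.
apply: eq_from_tnth => i; rewrite !tnth_mktuple (bigD1 j) //= tnth_mktuple eqxx.
rewrite (eq_bigr (fun k => X i k * tnth b k)); last first.
  by move=> k /negbTE kj; rewrite tnth_mktuple kj.
by rewrite [X i j * c]mulrC addrAC.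
Qed.

End helpers.

Theorem lemma2 (R : realType) (n p : nat) (X : 'M[R]_(n, p)) (sigma q : R)
    (G : probability (n.-tuple (measurableTypeR R)) R)
    (Pi : probability (p.-tuple (measurableTypeR R)) R) (Pij : 'I_p -> probability (measurableTypeR R) R) :
  0 < sigma -> 1 <= q ->
  std_gaussian G ->
  is_product_prob Pi Pij ->
  (\sum_(j < p) minimax_bayes1 X sigma q G j (Pij j)
     <= minimax_bayes X sigma q G Pi)%E.
Proof.
move=> _ _ _ hPi.
apply: le_ereal_inf_tmp => _ [T mT <-].
rewrite /bayes_risk.
have mg j := measurable_gj X sigma q T j mT.
have g0 j z : (0 <= gj X sigma q T j z)%E by rewrite lee_fin powR_ge0.
have -> : (fun b : p.-tuple (measurableTypeR R) => \int[G]_xi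
     (\sum_(j < p) `|tnth (T (lin_model X b sigma xi)) j - tnth b j| `^ q)%:E)%E =
   (fun b => \sum_(j < p) \int[G]_xi gj X sigma q T j (b, xi))%E.
  apply/funext => b; rewrite -ge0_integral_sum //; last first.
    by move=> j; exact: measurable_fun_pair2.
  by apply: eq_integral => xi _; rewrite sumEFin.
rewrite ge0_integral_sum //; try (by move=> j; exact: (measurable_fun_fubini_tonelli_F (m2 := G) _ (mg j) (g0 j)));
  try (by move=> j b _; apply: integral_ge0 => xi _; exact: g0).
apply: lee_sum => j _.
have mF : measurable_fun setT (fun b => \int[G]_xi gj X sigma q T j (b, xi))%E.
  exact: (measurable_fun_fubini_tonelli_F (m2 := G) _ (mg j) (g0 j)).
have F0 : forall b, (0 <= \int[G]_xi gj X sigma q T j (b, xi))%E.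
  by move=> b; apply: integral_ge0 => xi _; exact: g0.
rewrite (integral_decomp _ _ hPi j _ mF F0).
set m := minimax_bayes1 _ _ _ _ _ _.
have m0 : (0 <= m)%E.
  apply: le_ereal_inf_tmp => _ [Tj mTj <-].
  apply: integral_ge0 => c _; apply: integral_ge0 => xi _; rewrite lee_fin powR_ge0 //.
have <- : (\int[Pi]_b (cst m b) = m)%E.
  rewrite integral_cst //; transitivity (m * 1)%E; last exact: mule1.
  by congr (_ * _)%E; exact: probability_setT.
apply: ge0_le_integral => //.
- have mH : measurable_fun setT (fun z : measurableTypeR R * p.-tuple (measurableTypeR R) =>
     \int[G]_xi gj X sigma q T j (repl z.2 j z.1, xi))%E.
    exact: (measurableT_comp mF (measurable_repl j)).
  have H0 : forall z : measurableTypeR R * p.-tuple (measurableTypeR R),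
     (0 <= \int[G]_xi gj X sigma q T j (repl z.2 j z.1, xi))%E by move=> z; exact: F0.
  exact: (measurable_fun_fubini_tonelli_G (m1 := Pij j) _ mH H0).
move=> b _; apply: ereal_inf_lbound.
exists (shiftT X T j b); first exact: measurable_shiftT.
rewrite /bayes_risk1; apply: eq_integral => c _; apply: eq_integral => xi _.
by rewrite /gj /= lin_repl tnth_mktuple eqxx.
Qed.
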